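(* Let $\mathfrak{C}$ be a chromosome-set. For every finite substring $s$ of $\mathfrak{C}$ there exists a unique MES for $\mathfrak{C}$, denoted $MES(s)$, such that $s$ occurs exactly once in $MES(s)$ and every occurrence of $s$ in an element of $\mathfrak{C}$ extends to an occurrence of $MES(s)$ (i.e. lies, at the position of this unique occurrence, inside an occurrence of $MES(s)$ in the same element).
   Context: All strings are over a fixed finite alphabet $\Sigma$. A cyclic string is a bi-infinite periodic word $\mathbb{Z}\to\Sigma$ up to shift, with least period $d$. A finite string is a substring of a cyclic string $c$ if it is a contiguous block of $c$; its occurrences in $c$ are counted by start positions modulo $d$; a cyclic string is a substring only of itself. A chromosome-set is a (possibly infinite) set of cyclic strings; a string is a substring of it if it is a substring of one of its elements. A (finite or cyclic) string $s$ is a multiplicity-extremal substring (MES) for $\mathfrak{C}$ if $s$ is a substring of $\mathfrak{C}$ and every proper superstring $t$ of $s$ (a string $t\neq s$ containing $s$ as a substring) has, in at least one element of $\mathfrak{C}$, strictly fewer occurrences than $s$. *)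

(* Defs.v *)
From mathcomp Require Import all_boot.
Set Implicit Arguments. Unset Strict Implicit. Unset Printing Implicit Defensive.

Section Strings.
Variable Sigma : finType.

(* A word w represents a cyclic string (the bi-infinite word ...www...,
   up to shift) with least period size w iff w is primitive: nonempty and
   no nontrivial rotation of w equals w. *)
Definition primitive (w : seq Sigma) : Prop :=
  0 < size w /\ forall k, 0 < k < size w -> rot k w <> w.

(* A (finite or cyclic) string. A cyclic string is given by a representative
   primitive word; two representatives denote the same cyclic string iff they
   are rotations of each other (see str_eq). *)
Inductive str : Type :=
| Fin of seq Sigma
| Cyc of seq Sigma.

Definition wf_str (x : str) : Prop :=
  match x with Fin _ => True | Cyc w => primitive w end.

Definition str_eq (x y : str) : Prop :=
  match x, y with
  | Fin u, Fin v => u = v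
  | Cyc u, Cyc v => exists k, v = rot k u
  | _, _ => False
  end.

Definition cyc_block (w : seq Sigma) (i n : nat) : seq Sigma :=
  take n (flatten (nseq n (rot (i %% size w) w))).

Definition occ_fin_at (s w : seq Sigma) (i : nat) : bool :=
  (i + size s <= size w) && (take (size s) (drop i w) == s).

Definition occ_cyc_at (s w : seq Sigma) (i : nat) : bool :=
  cyc_block w i (size s) == s.

(* number of occurrences of x in y (start positions; modulo the period for
   cyclic y). A cyclic string occurs only in itself, exactly once. *)
Definition occ (x y : str) : nat :=
  match x, y with
  | Fin s, Fin w => count (occ_fin_at s w) (iota 0 (size w).+1)
  | Fin s, Cyc w => count (occ_cyc_at s w) (iota 0 (size w))
  | Cyc _, Fin _ => 0
  | Cyc u, Cyc w => if has (fun k => rot k w == u) (iota 0 (size w)) then 1 else 0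
  end.

(* chromosome-sets: sets of cyclic strings, given by primitive representatives *)
Definition chromosome_set (C : seq Sigma -> Prop) : Prop :=
  forall c, C c -> primitive c.

Definition substring_of_set (C : seq Sigma -> Prop) (x : str) : Prop :=
  exists2 c, C c & 0 < occ x (Cyc c).

Definition MES (C : seq Sigma -> Prop) (x : str) : Prop :=
  substring_of_set C x /\
  forall t : str, wf_str t -> 0 < occ x t -> ~ str_eq t x ->
    exists2 c, C c & occ t (Cyc c) < occ x (Cyc c).

(* The occurrence of the finite string s at position i of the element c
   extends to an occurrence of m: there is an occurrence of m in c (at
   position p, resp. identification c = rot r m for cyclic m) and an
   occurrence of s in m (at offset q) such that this occurrence of s inside
   the occurrence of m is the given one at position i. *)
Definition extends_to (s : seq Sigma) (m : str) (c : seq Sigma) (i : nat) : Prop :=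
  match m with
  | Fin u => exists p q, [/\ p < size c, occ_cyc_at u c p, occ_fin_at s u q
                           & (p + q) %% size c = i]
  | Cyc u => exists r q, [/\ r < size u, c = rot r u, q < size u,
                           occ_cyc_at s u q & (r + i) %% size u = q]
  end.

Definition all_occ_extend (C : seq Sigma -> Prop) (s : seq Sigma) (m : str) : Prop :=
  forall c, C c -> forall i, i < size c -> occ_cyc_at s c i -> extends_to s m c i.

End Strings.

(* Main.v *)
Require Import Defs.
From mathcomp Require Import all_boot.
From mathcomp Require Import all_order all_algebra zify ring.
From Stdlib Require Import Classical.
Set Implicit Arguments. Unset Strict Implicit. Unset Printing Implicit Defensive.
Import Order.TTheory GRing.Theory Num.Theory.

Lemma count_pos (P : pred nat) n : (0 < count P (iota 0 n))%N <-> exists2 i, (i < n)%N & P i.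
Proof.
rewrite -has_count; split.
  by move=> /hasP [i]; rewrite mem_iota add0n => /andP [_ hi] hP; exists i.
by move=> [i hi hP]; apply/hasP; exists i => //; rewrite mem_iota add0n hi.
Qed.

Lemma count_le1 (P : pred nat) n :
  (forall x y, (x < n)%N -> (y < n)%N -> P x -> P y -> x = y) -> (count P (iota 0 n) <= 1)%N.
Proof.
move=> H; rewrite -size_filter.
case E: (filter P (iota 0 n)) => [|x [|y l]] //.
have hx : x \in filter P (iota 0 n) by rewrite E inE eqxx.
have hy : y \in filter P (iota 0 n) by rewrite E !inE eqxx orbT.
have U : uniq (filter P (iota 0 n)) by apply: filter_uniq; apply: iota_uniq.
move: hx hy; rewrite !mem_filter !mem_iota !add0n => /andP [px /andP [_ xn]] /andP [py /andP [_ yn]].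
have exy := H x y xn yn px py.
by move: U; rewrite E /= inE exy eqxx.
Qed.

Lemma count_eq1 (P : pred nat) n j : (j < n)%N -> P j ->
  (forall x, (x < n)%N -> P x -> x = j) -> count P (iota 0 n) = 1%N.
Proof.
move=> jn pj H; apply/eqP; rewrite eqn_leq count_le1 /=.
  by apply/count_pos; exists j.
by move=> x y xn yn px py; rewrite (H x xn px) (H y yn py).
Qed.

Lemma count1_uniq (P : pred nat) n x y : count P (iota 0 n) = 1%N ->
  (x < n)%N -> (y < n)%N -> P x -> P y -> x = y.
Proof.
move=> C1 xn yn px py; apply/eqP/negPn/negP => nxy.
have U : uniq (filter P (iota 0 n)) by apply: filter_uniq; apply: iota_uniq.
have : (size [:: x; y] <= size (filter P (iota 0 n)))%N.
  apply: uniq_leq_size; first by rewrite /= inE nxy.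
  move=> t; rewrite !inE mem_filter mem_iota add0n => /orP [] /eqP ->; apply/andP; split=> //.
by rewrite size_filter C1.
Qed.

Lemma count_inj_le (P Q : pred nat) n (f : nat -> nat) :
  (forall i, (i < n)%N -> P i -> (f i < n)%N && Q (f i)) ->
  (forall i j, (i < n)%N -> (j < n)%N -> P i -> P j -> f i = f j -> i = j) ->
  (count P (iota 0 n) <= count Q (iota 0 n))%N.
Proof.
move=> H1 H2; rewrite -!size_filter -(size_map f).
apply: uniq_leq_size.
  rewrite map_inj_in_uniq; first by apply: filter_uniq; apply: iota_uniq.
  move=> i j; rewrite !mem_filter !mem_iota !add0n => /andP [pi /andP [_ hi]] /andP [pj /andP [_ hj]].
  exact: H2.
move=> t /mapP [i]; rewrite mem_filter mem_iota add0n => /andP [pi /andP [_ hi]] ->.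
have /andP [a b] := H1 i hi pi.
by rewrite mem_filter mem_iota add0n a b.
Qed.

Lemma count_inj_lt (P Q : pred nat) n (f : nat -> nat) q0 :
  (forall i, (i < n)%N -> P i -> (f i < n)%N && Q (f i)) ->
  (forall i j, (i < n)%N -> (j < n)%N -> P i -> P j -> f i = f j -> i = j) ->
  (q0 < n)%N -> Q q0 -> (forall i, (i < n)%N -> P i -> f i <> q0) ->
  (count P (iota 0 n) < count Q (iota 0 n))%N.
Proof.
move=> H1 H2 qn Qq H3; rewrite -!size_filter -(size_map f).
have -> : (size (map f (filter P (iota 0 n)))).+1 = size (q0 :: map f (filter P (iota 0 n))) by [].
apply: uniq_leq_size.
  rewrite /= map_inj_in_uniq; last first.
    move=> i j; rewrite !mem_filter !mem_iota !add0n => /andP [pi /andP [_ hi]] /andP [pj /andP [_ hj]].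
    exact: H2.
  rewrite filter_uniq ?iota_uniq // andbT.
  apply/mapP => [[i]]; rewrite mem_filter mem_iota add0n => /andP [pi /andP [_ hi]] E.
  exact: (H3 i hi pi (esym E)).
move=> t; rewrite inE => /orP [/eqP -> | ].
  by rewrite mem_filter mem_iota add0n qn Qq.
move=> /mapP [i]; rewrite mem_filter mem_iota add0n => /andP [pi /andP [_ hi]] ->.
have /andP [a b] := H1 i hi pi.
by rewrite mem_filter mem_iota add0n a b.
Qed.

Lemma induct_step (P : nat -> Prop) : P 0%N -> (exists b, ~ P b) -> exists r, P r /\ ~ P r.+1.
Proof.
move=> P0 [b nb]; elim: b nb => [|b IH] nb; first by [].
case: (classic (P b)) => pb; first by exists b.
exact: IH.
Qed.


Section Basic.
Local Open Scope ring_scope.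
Variable Sigma : finType.
Variable x0 : Sigma.

Definition cl (c : seq Sigma) (x : int) : Sigma := nth x0 c `|(x %% (size c)%:Z)%Z|%N.

Lemma modz_bounds (x : int) (n : nat) : (0 < n)%N -> 0 <= (x %% n%:Z)%Z /\ (x %% n%:Z)%Z < n%:Z.
Proof. move=> hn; split; lia. Qed.

Lemma absz_mod (x : int) (n : nat) : (0 < n)%N -> (`|(x %% n%:Z)%Z|%N)%:Z = (x %% n%:Z)%Z.
Proof. move=> hn; have [h1 h2] := modz_bounds x hn; lia. Qed.

Lemma absz_mod_lt (x : int) (n : nat) : (0 < n)%N -> (`|(x %% n%:Z)%Z| < n)%N.
Proof. move=> hn; have [h1 h2] := modz_bounds x hn; lia. Qed.

Lemma cl_congr c x y : (x %% (size c)%:Z)%Z = (y %% (size c)%:Z)%Z -> cl c x = cl c y.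
Proof. by rewrite /cl => ->. Qed.

Lemma cl_per c x (k : int) : cl c (x + k * (size c)%:Z) = cl c x.
Proof. apply: cl_congr; by rewrite addrC modzMDl. Qed.

Lemma cl_nat c (i : nat) : (i < size c)%N -> cl c i = nth x0 c i.
Proof. by move=> hi; rewrite /cl modz_nat modn_small. Qed.

Lemma modz_eqP (x y : int) (n : nat) : (0 < n)%N ->
  (x %% n%:Z)%Z = (y %% n%:Z)%Z <-> exists k : int, x = y + k * n%:Z.
Proof.
move=> hn; split.
  move=> E; exists ((x %/ n%:Z)%Z - (y %/ n%:Z)%Z).
  rewrite {1}(divz_eq x n%:Z) {1}(divz_eq y n%:Z) E; ring.
by move=> [k ->]; rewrite addrC modzMDl.
Qed.

Lemma nth_rot_cl c (j t : nat) : (j <= size c)%N -> (t < size c)%N ->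
  nth x0 (rot j c) t = cl c (j%:Z + t%:Z).
Proof.
move=> hj ht; rewrite /rot nth_cat size_drop.
case: ltnP => h.
  rewrite nth_drop -PoszD cl_nat //; lia.
rewrite nth_take; last by lia.
have -> : (j%:Z + t%:Z) = (t - (size c - j))%N%:Z + 1 * (size c)%:Z by lia.
by rewrite cl_per cl_nat; [congr nth; lia | lia].
Qed.

Lemma cl_rot c (k : nat) x : (k < size c)%N -> cl (rot k c) x = cl c (k%:Z + x).
Proof.
move=> hk; rewrite /cl size_rot nth_rot_cl; [|lia|apply: absz_mod_lt; lia].
apply: cl_congr; rewrite absz_mod; last by lia.
by rewrite modzDmr.
Qed.

Lemma nth_flatten_nseq (w : seq Sigma) m k : (0 < size w)%N -> (k < m * size w)%N ->
  nth x0 (flatten (nseq m w)) k = nth x0 w (k %% size w).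
Proof.
move=> hw; elim: m k => [|m IH] k hk; first by rewrite mul0n in hk.
rewrite /= nth_cat; case: ltnP => h; first by rewrite modn_small.
rewrite IH; last by rewrite mulSn in hk; lia.
by rewrite -{2}(subnK h) modnDr.
Qed.

Lemma size_cyc_block (c : seq Sigma) i m : (0 < size c)%N -> size (cyc_block c i m) = m.
Proof.
move=> hc; rewrite /cyc_block size_take size_flatten.
have -> : sumn (shape (nseq m (rot (i %% size c) c))) = (m * size c)%N.
  rewrite /shape map_nseq size_rot; elim: m => [|m IH] //=; by rewrite IH mulSn.
case: ltnP => h //; apply/eqP; rewrite eqn_leq h /=.
by rewrite -{1}(muln1 m) leq_mul2l hc orbT.
Qed.

Lemma nth_cyc_block (c : seq Sigma) (i m k : nat) : (0 < size c)%N -> (k < m)%N ->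
  nth x0 (cyc_block c i m) k = cl c (i%:Z + k%:Z).
Proof.
move=> hc hk; rewrite /cyc_block nth_take // nth_flatten_nseq; last first.
  - rewrite size_rot; apply: (leq_trans hk); by rewrite -{1}(muln1 m) leq_mul2l hc orbT.
  - by rewrite size_rot.
rewrite size_rot nth_rot_cl; [|apply/ltnW/ltn_pmod => // | apply/ltn_pmod => //].
apply: cl_congr; by rewrite -!PoszD !modz_nat modnDm.
Qed.

Definition occv (v c : seq Sigma) (x : int) : Prop :=
  forall k : nat, (k < size v)%N -> cl c (x + k%:Z) = nth x0 v k.

Lemma occ_cyc_atP v c (i : nat) : (0 < size c)%N -> occ_cyc_at v c i <-> occv v c i%:Z.
Proof.
move=> hc; rewrite /occ_cyc_at; split.
  move=> /eqP E k hk; by rewrite -E nth_cyc_block.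
move=> H; apply/eqP; apply: (@eq_from_nth _ x0); first by rewrite size_cyc_block.
move=> k; rewrite size_cyc_block // => hk; by rewrite nth_cyc_block // H.
Qed.

Lemma occv_congr v c x y : (x %% (size c)%:Z)%Z = (y %% (size c)%:Z)%Z -> occv v c x -> occv v c y.
Proof.
move=> E H k hk; rewrite -H //; apply: cl_congr.
by rewrite -modzDml -E modzDml.
Qed.

Lemma occv_per v c x (k : int) : occv v c (x + k * (size c)%:Z) <-> occv v c x.
Proof.
split; apply: occv_congr; by rewrite addrC modzMDl.
Qed.

Lemma occv_nat v c (x : int) : (0 < size c)%N -> occv v c x ->
  occ_cyc_at v c `|(x %% (size c)%:Z)%Z|%N.
Proof.
move=> hc H; apply/occ_cyc_atP => //; apply: occv_congr H.
by rewrite absz_mod // modz_mod.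
Qed.

Lemma occ_fin_atP s w j : occ_fin_at s w j <->
  (j + size s <= size w)%N /\ forall k, (k < size s)%N -> nth x0 w (j + k) = nth x0 s k.
Proof.
rewrite /occ_fin_at; split.
  move=> /andP [h /eqP E]; split=> // k hk; by rewrite -E nth_take // nth_drop.
move=> [h H]; rewrite h /=; apply/eqP.
have hs : size (take (size s) (drop j w)) = size s by rewrite size_takel // size_drop; lia.
apply: (@eq_from_nth _ x0); first by [].
move=> k; rewrite hs => hk.
by rewrite nth_take // nth_drop H.
Qed.

End Basic.


Section Prim.
Local Open Scope ring_scope.
Variable Sigma : finType.
Variable x0 : Sigma.
Notation cl := (cl x0).

Lemma prim_pos (c : seq Sigma) : primitive c -> (0 < size c)%N.
Proof. by case. Qed.

Lemma prim_shift (c : seq Sigma) (p : nat) : primitive c -> (0 < p < size c)%N ->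
  (forall t, cl c (t + p%:Z) = cl c t) -> False.
Proof.
move=> [hc Hp] hp H; apply: (Hp p hp).
apply: (@eq_from_nth _ x0); first by rewrite size_rot.
move=> j; rewrite size_rot => hj.
rewrite nth_rot_cl //; last by lia.
by rewrite addrC H cl_nat.
Qed.

Lemma prim_same_pos_aux (c : seq Sigma) (x y : int) : primitive c ->
  (forall t, cl c (x + t) = cl c (y + t)) ->
  (`|(x %% (size c)%:Z)%Z| < `|(y %% (size c)%:Z)%Z|)%N -> False.
Proof.
move=> pc H hab; have hc := prim_pos pc.
set n := size c in H hab hc *.
set a := `|(x %% n%:Z)%Z|%N in hab; set b := `|(y %% n%:Z)%Z|%N in hab.
have ea : (x %% n%:Z)%Z = (a%:Z %% n%:Z)%Z by rewrite absz_mod // modz_mod.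
have eb : (y %% n%:Z)%Z = (b%:Z %% n%:Z)%Z by rewrite absz_mod // modz_mod.
have [kx Ex] := (modz_eqP _ _ hc).1 ea.
have [ky Ey] := (modz_eqP _ _ hc).1 eb.
have bn : (b < n)%N by apply: absz_mod_lt.
apply: (@prim_shift c (b - a)) => //; first by lia.
move=> t.
have -> : t + (b - a)%N%:Z = (y + (t - a%:Z)) + (- ky) * n%:Z.
  rewrite Ey -subzn; [ring | lia].
rewrite cl_per -H.
have -> : x + (t - a%:Z) = t + kx * n%:Z by rewrite Ex; ring.
by rewrite cl_per.
Qed.

Lemma prim_same_pos (c : seq Sigma) (x y : int) : primitive c ->
  (forall t, cl c (x + t) = cl c (y + t)) ->
  (x %% (size c)%:Z)%Z = (y %% (size c)%:Z)%Z.
Proof.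
move=> pc H; have hc := prim_pos pc.
case: (ltngtP `|(x %% (size c)%:Z)%Z| `|(y %% (size c)%:Z)%Z|) => h.
- by case: (prim_same_pos_aux pc H h).
- by case: (@prim_same_pos_aux c y x pc (fun t => esym (H t)) h).
- by rewrite -(absz_mod x hc) -(absz_mod y hc) h.
Qed.

Lemma prim_same_size_aux (c c' : seq Sigma) (x y : int) : primitive c -> primitive c' ->
  (forall t, cl c (x + t) = cl c' (y + t)) -> (size c < size c')%N -> False.
Proof.
move=> pc pc' H hlt; have hc := prim_pos pc.
apply: (@prim_shift c' (size c) pc'); first by rewrite hc.
move=> t.
have -> : t + (size c)%:Z = y + (t - y + 1 * (size c)%:Z) by ring.
rewrite -H addrA cl_per H; congr cl; ring.
Qed.

Lemma prim_same_size (c c' : seq Sigma) (x y : int) : primitive c -> primitive c' ->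
  (forall t, cl c (x + t) = cl c' (y + t)) -> size c = size c'.
Proof.
move=> pc pc' H; case: (ltngtP (size c) (size c')) => h //.
- by case: (prim_same_size_aux pc pc' H h).
- by case: (@prim_same_size_aux c' c y x pc' pc (fun t => esym (H t)) h).
Qed.

Lemma rot_of_full (c c' : seq Sigma) (x y : int) : size c = size c' -> (0 < size c)%N ->
  (forall t, cl c (x + t) = cl c' (y + t)) ->
  c = rot `|((y - x) %% (size c)%:Z)%Z|%N c'.
Proof.
move=> es hc H.
apply: (@eq_from_nth _ x0); first by rewrite size_rot.
move=> j hj; rewrite nth_rot_cl -?es; [|apply/ltnW/absz_mod_lt => //|by []].
rewrite -cl_nat // absz_mod //.
have -> : j%:Z = x + (j%:Z - x) by ring.
rewrite H es; apply: cl_congr; rewrite -es.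
by rewrite modzDml; congr modz; ring.
Qed.

End Prim.


Section Main.
Local Open Scope ring_scope.
Variable Sigma : finType.
Variable x0 : Sigma.
Notation cl := (cl x0).
Notation occv := (occv x0).
Variable C : seq Sigma -> Prop.
Hypothesis hC : chromosome_set C.
Variable s : seq Sigma.
Hypothesis hs : (0 < size s)%N.
Variable c0 : seq Sigma.
Variable i0 : nat.
Hypothesis HC0 : C c0.
Hypothesis hi0 : (i0 < size c0)%N.
Hypothesis Hocc0 : occ_cyc_at s c0 i0.

Let z0 : int := i0%:Z.

Definition OccZ c z := C c /\ occv s c z.

Definition agreeR b := forall c z, OccZ c z -> forall k : nat, (k < b)%N ->
  cl c (z + k%:Z) = cl c0 (z0 + k%:Z).
Definition agreeL a := forall c z, OccZ c z -> forall k : nat, (0 < k <= a)%N ->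
  cl c (z - k%:Z) = cl c0 (z0 - k%:Z).

Lemma hc0 : (0 < size c0)%N. Proof. exact: prim_pos (hC HC0). Qed.

Lemma occ0 : OccZ c0 z0.
Proof. split => //; exact/(occ_cyc_atP _ _ _ hc0). Qed.

Lemma agreeR_s : agreeR (size s).
Proof. by move=> c z [_ H] k hk; rewrite H //; have [_ H0] := occ0; rewrite H0. Qed.

Lemma modz_cancel (a b q : int) (n : nat) : (0 < n)%N ->
  ((a + q) %% n%:Z)%Z = ((b + q) %% n%:Z)%Z -> (a %% n%:Z)%Z = (b %% n%:Z)%Z.
Proof.
move=> hn /(modz_eqP _ _ hn) [k E]; apply/(modz_eqP _ _ hn); exists k.
have -> : a = a + q - q by ring.
rewrite E; ring.
Qed.

Lemma nat_of_modz (a b n : nat) : (0 < n)%N -> (b < n)%N -> ((a%:Z) %% n%:Z)%Z = b%:Z -> (a %% n)%N = b.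
Proof. by move=> hn hb; rewrite modz_nat => -[]. Qed.

Lemma modz_nat_eq (a b n : nat) : (a < n)%N -> (b < n)%N ->
  ((a%:Z) %% n%:Z)%Z = ((b%:Z) %% n%:Z)%Z -> a = b.
Proof. by move=> ha hb; rewrite !modz_nat !modn_small // => -[]. Qed.

Lemma compose_occ (c u : seq Sigma) (p q : nat) : (0 < size c)%N ->
  occ_cyc_at u c p -> occ_fin_at s u q -> occv s c (p%:Z + q%:Z).
Proof.
move=> hc /(occ_cyc_atP _ _ _ hc) Hu /(occ_fin_atP x0) [hq Hs] k hk.
rewrite -addrA -PoszD Hu ?Hs //; lia.
Qed.

Lemma big_shift (t : int) (n n' : nat) : (0 < n)%N -> (0 < n')%N ->
  exists j : nat, 0 < t + (j * n * n')%N%:Z.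
Proof.
move=> hn hn'; exists (`|t| + 1)%N.
have : ((`|t| + 1) <= (`|t| + 1) * n * n')%N.
  by rewrite -mulnA leq_pmulr // muln_gt0 hn hn'.
lia.
Qed.

Lemma full_of_right : (forall b, agreeR b) -> forall c z, OccZ c z ->
  forall t, cl c (z + t) = cl c0 (z0 + t).
Proof.
move=> H c z hz t; have hc := prim_pos (hC hz.1).
have [j hj] := big_shift t hc hc0.
set v := t + (j * size c * size c0)%N%:Z in hj.
have Ev : v = `|v|%N%:Z by lia.
have -> : z + t = z + v + (- (j * size c0)%N%:Z) * (size c)%:Z.
  rewrite /v -mulnA (mulnC (size c)) mulnA PoszM; ring.
rewrite cl_per Ev (H (`|v|.+1)%N) // -Ev.
have -> : z0 + v = z0 + t + (j * size c)%N%:Z * (size c0)%:Z by rewrite /v PoszM; ring.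
by rewrite cl_per.
Qed.

Lemma full_of_left : (forall a, agreeL a) -> forall c z, OccZ c z ->
  forall t, cl c (z + t) = cl c0 (z0 + t).
Proof.
move=> H c z hz t; have hc := prim_pos (hC hz.1).
have [j hj] := big_shift (- t) hc hc0.
set v := - t + (j * size c * size c0)%N%:Z in hj.
have Ev : v = `|v|%N%:Z by lia.
have -> : z + t = z - v + (j * size c0)%N%:Z * (size c)%:Z.
  rewrite /v -mulnA (mulnC (size c)) mulnA PoszM; ring.
rewrite cl_per Ev (H `|v|%N) //; last by apply/andP; split; lia.
rewrite -Ev.
have -> : z0 - v = z0 + t + (- (j * size c)%N%:Z) * (size c0)%:Z by rewrite /v PoszM; ring.
by rewrite cl_per.
Qed.

Section CaseA.
Hypothesis HA : forall b, agreeR b.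

Lemma A_full c z : OccZ c z -> forall t, cl c (z + t) = cl c0 (z0 + t).
Proof. exact: full_of_right. Qed.

Lemma A_pos c (x y : int) : OccZ c x -> OccZ c y -> (x %% (size c)%:Z)%Z = (y %% (size c)%:Z)%Z.
Proof.
move=> hx hy; apply: (@prim_same_pos _ x0 c x y (hC hx.1)) => t.
by rewrite (A_full hx) (A_full hy).
Qed.

Lemma A_occ1 : occ (Fin s) (Cyc c0) = 1%N.
Proof.
rewrite /=; apply: (count_eq1 hi0 Hocc0) => x hx ox.
apply: (@modz_nat_eq _ _ (size c0)) => //; apply: A_pos; last exact: occ0.
by split => //; apply/(occ_cyc_atP _ _ _ hc0).
Qed.

Lemma A_MES : MES C (Cyc c0).
Proof.
split.
  exists c0 => //=; have -> : has (fun k => rot k c0 == c0) (iota 0 (size c0)).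
    by apply/hasP; exists 0%N; rewrite ?rot0 // mem_iota hc0.
  by [].
move=> [w|w] _ /=; first by [].
case: hasP => // [[k _ /eqP E]] _ hneq; by case: hneq; exists k.
Qed.

Lemma A_ext : all_occ_extend C s (Cyc c0).
Proof.
move=> c hc i hi ho.
have hcp := prim_pos (hC hc).
have oz : OccZ c i by split => //; apply/(occ_cyc_atP _ _ _ hcp).
have F := A_full oz.
have es := prim_same_size (hC hc) (hC HC0) F.
have Er := rot_of_full es hcp F.
exists `|((z0 - i%:Z) %% (size c)%:Z)%Z|%N, i0; split => //.
- by rewrite -es; apply: absz_mod_lt.
- apply: nat_of_modz => //; first exact: hc0.
  rewrite PoszD absz_mod // es modzDml.
  have -> : z0 - i%:Z + i%:Z = i0%:Z by rewrite /z0; ring.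
  by rewrite modz_small //; lia.
Qed.

Lemma A_uniq m' : wf_str m' -> MES C m' -> occ (Fin s) m' = 1%N ->
  all_occ_extend C s m' -> str_eq m' (Cyc c0).
Proof.
case: m' => [u'|w] wf mes o1 ext; last first.
  have [r [q [_ Er _ _ _]]] := ext c0 HC0 i0 hi0 Hocc0.
  by exists r.
exfalso.
have [p [q [hp op oq _]]] := ext c0 HC0 i0 hi0 Hocc0.
have [c hc hlt] : exists2 c, C c & (occ (Cyc c0) (Cyc c) < occ (Fin u') (Cyc c))%N.
  apply: mes.2 => //; first exact: hC.
  by rewrite /=; apply/count_pos; exists p.
have hcp := prim_pos (hC hc).
have le1 : (occ (Fin u') (Cyc c) <= 1)%N.
  rewrite /=; apply: count_le1 => p1 p2 h1 h2 o1' o2'.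
  apply: (@modz_nat_eq _ _ (size c)) => //; apply: (@modz_cancel _ _ q%:Z) => //.
  apply: A_pos; split => //; exact: (compose_occ hcp _ oq).
have h0 : occ (Cyc c0) (Cyc c) = 0%N by lia.
have [p1 hp1 op1] : exists2 p1, (p1 < size c)%N & occ_cyc_at u' c p1.
  by apply/count_pos; move: hlt; rewrite h0.
have oz : OccZ c (p1%:Z + q%:Z) by split => //; exact: (compose_occ hcp op1 oq).
have F := A_full oz.
have F' : forall t, cl c0 (z0 + t) = cl c (p1%:Z + q%:Z + t) by move=> t; rewrite F.
have es := prim_same_size (hC HC0) (hC hc) F'.
have Er := rot_of_full es hc0 F'.
move: h0; rewrite /=.
case: hasP => // [[]]; exists `|((p1%:Z + q%:Z - z0) %% (size c0)%:Z)%Z|%N.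
  by rewrite mem_iota add0n /= -es; apply: absz_mod_lt; exact: hc0.
by rewrite -Er.
Qed.

End CaseA.

Lemma ext_cl (c w : seq Sigma) (r i q : nat) : c = rot r w -> (r < size w)%N ->
  ((r + i) %% size w)%N = q -> forall t, cl c (i%:Z + t) = cl w (q%:Z + t).
Proof.
move=> E hr Eq t; rewrite E cl_rot //; apply: cl_congr.
by rewrite -Eq -modz_nat modzDml PoszD addrA.
Qed.

Section CaseB.
Variables r a : nat.
Hypothesis HR : agreeR r.
Hypothesis HR' : ~ agreeR r.+1.
Hypothesis HL : agreeL a.
Hypothesis HL' : ~ agreeL a.+1.
Hypothesis hrs : (size s <= r)%N.

Definition u := mkseq (fun k : nat => cl c0 (z0 - a%:Z + k%:Z)) (a + r).

Lemma size_u : size u = (a + r)%N.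
Proof. by rewrite size_mkseq. Qed.

Lemma B_W c z : OccZ c z -> forall w : int, - a%:Z <= w -> w < r%:Z ->
  cl c (z + w) = cl c0 (z0 + w).
Proof.
move=> oz w h1 h2.
case: (lerP 0 w) => hw.
  have -> : w = `|w|%N%:Z by lia.
  apply: HR => //; lia.
have -> : w = - `|w|%N%:Z by lia.
apply: HL => //; apply/andP; split; lia.
Qed.

Lemma B_nth_u k : (k < a + r)%N -> nth x0 u k = cl c0 (z0 - a%:Z + k%:Z).
Proof. by move=> hk; rewrite nth_mkseq. Qed.

Lemma B_Uocc c z : OccZ c z -> occv u c (z - a%:Z).
Proof.
move=> oz k; rewrite size_u => hk; rewrite B_nth_u //.
have -> : z - a%:Z + k%:Z = z + (k%:Z - a%:Z) by ring.
rewrite B_W //; [congr cl; ring | lia | lia].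
Qed.

Lemma B_sin_u : occ_fin_at s u a.
Proof.
apply/(occ_fin_atP x0); split; first by rewrite size_u; lia.
move=> k hk; rewrite B_nth_u; last by lia.
have [_ H0] := occ0; rewrite -H0 //; congr cl; rewrite PoszD; ring.
Qed.

Lemma B_dR : exists c1 z1, OccZ c1 z1 /\ cl c1 (z1 + r%:Z) <> cl c0 (z0 + r%:Z).
Proof.
apply: NNPP => N; apply: HR' => c z oz k hk.
case: (ltnP k r) => hkr; first exact: HR.
have -> : k = r by lia.
apply: NNPP => ne; apply: N; by exists c, z.
Qed.

Lemma B_dL : exists c1 z1, OccZ c1 z1 /\ cl c1 (z1 - a.+1%:Z) <> cl c0 (z0 - a.+1%:Z).
Proof.
apply: NNPP => N; apply: HL' => c z oz k /andP [hk1 hk2].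
case: (ltnP k a.+1) => hka; first by apply: HL => //; rewrite hk1.
have -> : k = a.+1 by lia.
apply: NNPP => ne; apply: N; by exists c, z.
Qed.

Section Cover.
Variable j : nat.
Hypothesis hj : occ_fin_at s u j.
Hypothesis hja : j <> a.

Let d : int := j%:Z - a%:Z.

Lemma cov_shift1 c z : OccZ c z -> OccZ c (z + d).
Proof.
move=> oz; split; first exact: oz.1.
have [hj1 hj2] := (occ_fin_atP x0 _ _ _).1 hj.
rewrite size_u in hj1.
move=> k hk; rewrite -hj2 // B_nth_u; last by lia.
have -> : z + d + k%:Z = z + (d + k%:Z) by ring.
rewrite B_W //; [congr cl; rewrite /d PoszD; ring | rewrite /d; lia | rewrite /d; lia].
Qed.

Lemma cov_shiftM c z : OccZ c z -> forall m : nat, OccZ c (z + m%:Z * d).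
Proof.
move=> oz; elim=> [|m IH]; first by rewrite mul0r addr0.
have -> : z + m.+1%:Z * d = z + m%:Z * d + d by rewrite -addn1 PoszD; ring.
exact: cov_shift1.
Qed.

Let e : nat := `|d|%N.

Lemma cov_e_pos : (0 < e)%N.
Proof. rewrite /e /d; lia. Qed.

Lemma cov_e_le : (e <= a + r)%N.
Proof.
have [hj1 _] := (occ_fin_atP x0 _ _ _).1 hj; rewrite size_u in hj1.
rewrite /e /d; lia.
Qed.

Lemma cov_shiftE c z : OccZ c z -> OccZ c (z + e%:Z).
Proof.
move=> oz; case: (lerP 0 d) => hd.
  have -> : e%:Z = d by rewrite /e; lia.
  exact: cov_shift1.
have hc := prim_pos (hC oz.1).
have [_ H] := cov_shiftM oz (size c).-1.
split; first exact: oz.1.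
apply: (proj1 (@occv_per _ x0 s c (z + e%:Z) d)); apply: occv_congr H.
congr modz; have -> : e%:Z = - d by rewrite /e; lia.
have -> : ((size c).-1)%:Z = (size c)%:Z - 1 by rewrite -subn1 -subzn //.
ring.
Qed.

Lemma cov_shiftEM c z : OccZ c z -> forall m : nat, OccZ c (z + m%:Z * e%:Z).
Proof.
move=> oz; elim=> [|m IH]; first by rewrite mul0r addr0.
have -> : z + m.+1%:Z * e%:Z = z + m%:Z * e%:Z + e%:Z by rewrite -addn1 PoszD; ring.
exact: cov_shiftE.
Qed.

Lemma cov_local c z : OccZ c z -> forall k : nat,
  cl c (z + k%:Z) = cl c0 (z0 + (((k + a) %% e)%N%:Z - a%:Z)).
Proof.
move=> oz k.
have E := divn_eq (k + a) e.
have he := cov_e_pos; have hle := cov_e_le.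
have hm : ((k + a) %% e < e)%N by apply: ltn_pmod.
have -> : z + k%:Z = (z + ((k + a) %/ e)%N%:Z * e%:Z) + (((k + a) %% e)%N%:Z - a%:Z).
  have : (k + a)%N%:Z = (((k + a) %/ e) * e + (k + a) %% e)%N%:Z by rewrite -E.
  rewrite !PoszD PoszM => H; have -> : k%:Z = (k + a)%N%:Z - a%:Z by rewrite PoszD; ring.
  rewrite PoszD H; ring.
apply: B_W; [exact: cov_shiftEM | lia | lia].
Qed.

Lemma cov_contra : False.
Proof.
apply: HR' => c z oz k _.
by rewrite (cov_local oz) (cov_local occ0).
Qed.

End Cover.

Lemma B_occ1 : occ (Fin s) (Fin u) = 1%N.
Proof.
rewrite /=; apply: (@count_eq1 (occ_fin_at s u) (size u).+1 a _ B_sin_u).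
  by rewrite size_u; lia.
move=> x _ hx; case: (eqVneq x a) => // hxa.
by case: (cov_contra hx (elimN eqP hxa)).
Qed.

Lemma B_ext : all_occ_extend C s (Fin u).
Proof.
move=> c hc i hi ho.
have hcp := prim_pos (hC hc).
have oz : OccZ c i by split => //; apply/(occ_cyc_atP _ _ _ hcp).
exists `|((i%:Z - a%:Z) %% (size c)%:Z)%Z|%N, a; split.
- exact: absz_mod_lt.
- exact: occv_nat (B_Uocc oz).
- exact: B_sin_u.
- apply: nat_of_modz => //.
  rewrite PoszD absz_mod // modzDml.
  have -> : i%:Z - a%:Z + a%:Z = i%:Z by ring.
  by rewrite modz_small //; lia.
Qed.

Lemma shift_inj (n : nat) (sh : int) p1 p2 : (0 < n)%N -> (p1 < n)%N -> (p2 < n)%N ->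
  `|((p1%:Z + sh) %% n%:Z)%Z|%N = `|((p2%:Z + sh) %% n%:Z)%Z|%N -> p1 = p2.
Proof.
move=> hn h1 h2 E; apply: (@modz_nat_eq _ _ n) => //; apply: (@modz_cancel _ _ sh) => //.
by rewrite -(absz_mod (p1%:Z + sh) hn) -(absz_mod (p2%:Z + sh) hn) E.
Qed.

Lemma B_sep (w : seq Sigma) (j : nat) (y : int) c z : occ_fin_at u w j ->
  0 <= j%:Z + a%:Z + y -> j%:Z + a%:Z + y < (size w)%:Z -> OccZ c z ->
  cl c (z + y) <> nth x0 w (absz (j%:Z + a%:Z + y)) ->
  exists2 c, C c & (occ (Fin w) (Cyc c) < occ (Fin u) (Cyc c))%N.
Proof.
move=> hj hy1 hy2 oz hne; exists c; first exact: oz.1.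
have hcp := prim_pos (hC oz.1).
have [hj1 hj2] := (occ_fin_atP x0 _ _ _).1 hj; rewrite size_u in hj1 hj2.
rewrite /=.
apply: (@count_inj_lt _ _ _ (fun p => `|((p%:Z + j%:Z) %% (size c)%:Z)%Z|%N)
          `|((z - a%:Z) %% (size c)%:Z)%Z|%N).
- move=> p hp op; rewrite absz_mod_lt //=.
  apply: (@occv_nat _ x0) => //.
  move=> k; rewrite size_u => hk.
  have /(occ_cyc_atP _ _ _ hcp) Hw := op.
  rewrite -hj2 // -Hw; last by lia.
  congr cl; rewrite !PoszD; ring.
- move=> p1 p2 h1 h2 _ _; exact: shift_inj.
- exact: absz_mod_lt.
- exact: occv_nat (B_Uocc oz).
- move=> p hp op E; apply: hne.
  have /(occ_cyc_atP _ _ _ hcp) Hw := op.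
  rewrite -Hw; last by lia.
  have : ((p%:Z + j%:Z) %% (size c)%:Z)%Z = ((z - a%:Z) %% (size c)%:Z)%Z.
    by rewrite -(absz_mod (p%:Z + j%:Z) hcp) -(absz_mod (z - a%:Z) hcp) E.
  move=> /(modz_eqP _ _ hcp) [kk Ekk].
  have -> : z + y = (p%:Z + (absz (j%:Z + a%:Z + y))%:Z) + (- kk) * (size c)%:Z.
    have -> : (absz (j%:Z + a%:Z + y))%:Z = j%:Z + a%:Z + y by lia.
    have -> : z = p%:Z + j%:Z - kk * (size c)%:Z + a%:Z by rewrite Ekk; ring.
    ring.
  by rewrite cl_per.
Qed.

Lemma B_MES : MES C (Fin u).
Proof.
split.
  have [p [q [hp op _ _]]] := B_ext HC0 hi0 Hocc0.
  exists c0 => //; rewrite /=; apply/count_pos; by exists p.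
move=> [w|w] wf hpos hneq.
- have [j hj oj] := (count_pos _ _).1 hpos.
  have [hj1 hj2] := (occ_fin_atP x0 _ _ _).1 oj; rewrite size_u in hj1 hj2.
  case: (ltnP 0 j) => hj0.
    have [c1 [z1 [oz1 dis]]] := B_dL.
    have hy1 : 0 <= j%:Z + a%:Z + (- a.+1%:Z) by lia.
    have hy2 : j%:Z + a%:Z + (- a.+1%:Z) < (size w)%:Z by lia.
    case: (eqVneq (cl c1 (z1 + (- a.+1%:Z))) (nth x0 w (absz (j%:Z + a%:Z + (- a.+1%:Z))))) => E.
      apply: (B_sep oj hy1 hy2 occ0); rewrite -E; exact: (fun h => dis (esym h)).
    exact: (B_sep oj hy1 hy2 oz1 (elimN eqP E)).
  case: (ltnP (j + (a + r)) (size w)) => hj3.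
    have [c1 [z1 [oz1 dis]]] := B_dR.
    have hy1 : 0 <= j%:Z + a%:Z + r%:Z by lia.
    have hy2 : j%:Z + a%:Z + r%:Z < (size w)%:Z by lia.
    case: (eqVneq (cl c1 (z1 + r%:Z)) (nth x0 w (absz (j%:Z + a%:Z + r%:Z)))) => E.
      apply: (B_sep oj hy1 hy2 occ0); rewrite -E; exact: (fun h => dis (esym h)).
    exact: (B_sep oj hy1 hy2 oz1 (elimN eqP E)).
  exfalso; apply: hneq => /=.
  have j0 : j = 0%N by lia.
  move: oj; rewrite /occ_fin_at j0 drop0 size_u => /andP [_ /eqP <-].
  have -> : (a + r)%N = size w by lia.
  by rewrite take_size.
- apply: NNPP => N.
  have N' : forall c, C c -> (occ (Fin u) (Cyc c) <= occ (Cyc w) (Cyc c))%N.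
    move=> c hc; rewrite leqNgt; apply/negP => h; apply: N; by exists c.
  have [c1 [z1 [oz1 dis]]] := B_dR.
  have hc1 := prim_pos (hC oz1.1).
  have rotof : forall c z, OccZ c z -> exists2 k, (k < size c)%N & w = rot k c.
    move=> c z oz.
    have hcp := prim_pos (hC oz.1).
    have : (0 < occ (Cyc w) (Cyc c))%N.
      apply: leq_trans (N' c oz.1); rewrite /=; apply/count_pos.
      exists `|((z - a%:Z) %% (size c)%:Z)%Z|%N; first exact: absz_mod_lt.
      exact: occv_nat (B_Uocc oz).
    rewrite /=; case: hasP => // [[k]]; rewrite mem_iota add0n /= => hk /eqP <- _.
    by exists k.
  have [k1 hk1 E1] := rotof _ _ oz1.
  have [k0 hk0 E0] := rotof _ _ occ0.
  have T : forall t, cl c1 t = cl c0 (t - k1%:Z + k0%:Z).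
    move=> t.
    have A1 : cl c1 t = cl w (t - k1%:Z) by rewrite E1 cl_rot //; congr cl; ring.
    have A0 : cl w (t - k1%:Z) = cl c0 (t - k1%:Z + k0%:Z) by rewrite E0 cl_rot //; congr cl; ring.
    by rewrite A1 A0.
  set z2 := z1 - k1%:Z + k0%:Z.
  have oz2 : OccZ c0 z2.
    split => // k hk; rewrite -(oz1.2 k hk) T; congr cl; rewrite /z2; ring.
  have ne : (z2 %% (size c0)%:Z)%Z <> (z0 %% (size c0)%:Z)%Z.
    move=> E; apply: dis; rewrite T.
    apply: cl_congr.
    have -> : z1 + r%:Z - k1%:Z + k0%:Z = z2 + r%:Z by rewrite /z2; ring.
    by rewrite -modzDml E modzDml.
  have le1 : (occ (Fin u) (Cyc c0) <= 1)%N.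
    have h1 := N' c0 HC0; have : (occ (Cyc w) (Cyc c0) <= 1)%N by rewrite /=; case: ifP.
    lia.
  have ge1 : (0 < occ (Fin u) (Cyc c0))%N.
    rewrite /=; apply/count_pos; exists `|((z0 - a%:Z) %% (size c0)%:Z)%Z|%N.
      exact: (absz_mod_lt _ hc0).
    exact: (occv_nat hc0 (B_Uocc occ0)).
  have e1 : occ (Fin u) (Cyc c0) = 1%N by lia.
  apply: ne; apply: (@modz_cancel _ _ (- a%:Z)) => //; first exact: hc0.
  rewrite -(absz_mod _ hc0) -(absz_mod (z0 + - a%:Z) hc0); congr Posz.
  apply: (count1_uniq e1).
  + exact: (absz_mod_lt _ hc0).
  + exact: (absz_mod_lt _ hc0).
  + exact: (occv_nat hc0 (B_Uocc oz2)).
  + exact: (occv_nat hc0 (B_Uocc occ0)).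
Qed.

Lemma B_uniq m' : wf_str m' -> MES C m' -> occ (Fin s) m' = 1%N ->
  all_occ_extend C s m' -> str_eq m' (Fin u).
Proof.
case: m' => [u'|w] wf mes o1 ext; last first.
  exfalso.
  have [c1 [z1 [oz1 dis]]] := B_dR.
  have hc1 := prim_pos (hC oz1.1).
  set i1 := `|(z1 %% (size c1)%:Z)%Z|%N.
  have oi1 : occ_cyc_at s c1 i1 := occv_nat hc1 oz1.2.
  have [r1 [q1 [hr1 E1 hq1 oq1 Eq1]]] := ext c1 oz1.1 i1 (absz_mod_lt _ hc1) oi1.
  have [r0 [q0 [hr0 E0 hq0 oq0 Eq0]]] := ext c0 HC0 i0 hi0 Hocc0.
  have eq : q1 = q0 by apply: (count1_uniq o1).
  apply: dis.
  have -> : cl c1 (z1 + r%:Z) = cl c1 (i1%:Z + r%:Z).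
    apply: cl_congr; by rewrite /i1 absz_mod // modzDml.
  by rewrite (ext_cl E1 hr1 Eq1) (ext_cl E0 hr0 Eq0) eq.
case: (classic (u' = u)) => [-> // | hne].
exfalso.
have [p0 [q [hp0 op0 oq Eq0]]] := ext c0 HC0 i0 hi0 Hocc0.
have [hq1 hq2] := (occ_fin_atP x0 _ _ _).1 oq.
have Hone : forall c z, OccZ c z -> forall y : nat, (y < size u')%N ->
    cl c (z - q%:Z + y%:Z) = nth x0 u' y.
  move=> c z oz y hy.
  have hcp := prim_pos (hC oz.1).
  set i := `|(z %% (size c)%:Z)%Z|%N.
  have oi : occ_cyc_at s c i := occv_nat hcp oz.2.
  have [p [qc [hp op oqc Eq]]] := ext c oz.1 i (absz_mod_lt _ hcp) oi.
  have [hqc1 _] := (occ_fin_atP x0 _ _ _).1 oqc.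
  have eqc : qc = q by apply: (count1_uniq o1) => //; lia.
  rewrite eqc in Eq.
  have Ei : i%:Z = (z %% (size c)%:Z)%Z by rewrite /i absz_mod.
  have Ep : (((p + q)%N%:Z) %% (size c)%:Z)%Z = i%:Z by rewrite modz_nat Eq.
  have -> : cl c (z - q%:Z + y%:Z) = cl c (p%:Z + y%:Z).
    apply: cl_congr.
    have -> : z - q%:Z + y%:Z = z + (y%:Z - q%:Z) by ring.
    rewrite -modzDml -Ei -Ep modzDml.
    by congr modz; rewrite PoszD; ring.
  by have /(occ_cyc_atP _ _ _ hcp) -> := op.
have hqa : (q <= a)%N.
  case: (leqP q a) => // hqa; exfalso; apply: HL' => c z oz k /andP [k1 k2].
  have -> : z - k%:Z = z - q%:Z + (q - k)%N%:Z by rewrite -subzn; [ring | lia].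
  have -> : z0 - k%:Z = z0 - q%:Z + (q - k)%N%:Z by rewrite -subzn; [ring | lia].
  have hy : (q - k < size u')%N by lia.
  by rewrite (Hone _ _ oz _ hy) (Hone _ _ occ0 _ hy).
have hur : (size u' <= q + r)%N.
  case: (leqP (size u') (q + r)) => // hur; exfalso; apply: HR' => c z oz k hk.
  have -> : z + k%:Z = z - q%:Z + (q + k)%N%:Z by rewrite PoszD; ring.
  have -> : z0 + k%:Z = z0 - q%:Z + (q + k)%N%:Z by rewrite PoszD; ring.
  have hy : (q + k < size u')%N by lia.
  by rewrite (Hone _ _ oz _ hy) (Hone _ _ occ0 _ hy).
have oin : occ_fin_at u' u (a - q).
  apply/(occ_fin_atP x0); split; first by rewrite size_u; lia.
  move=> y hy; rewrite B_nth_u; last by lia.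
  rewrite -(Hone _ _ occ0) //; congr cl.
  by rewrite PoszD -subzn //; ring.
have pos : (0 < occ (Fin u') (Fin u))%N.
  apply: (proj2 (count_pos (occ_fin_at u' u) (size u).+1)).
  exists (a - q)%N => //; rewrite size_u; lia.
have [c hc hlt] := mes.2 (Fin u) I pos (fun E => hne (esym E)).
have hcp := prim_pos (hC hc).
have : (occ (Fin u') (Cyc c) <= occ (Fin u) (Cyc c))%N.
  rewrite /=.
  apply: (@count_inj_le _ _ _ (fun p => `|((p%:Z + (q%:Z - a%:Z)) %% (size c)%:Z)%Z|%N)).
    move=> p hp op; rewrite absz_mod_lt //=.
    apply: (@occv_nat _ x0) => //.
    have oz : OccZ c (p%:Z + q%:Z) by split => //; exact: (compose_occ hcp op oq).
    have := B_Uocc oz.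
    by have -> : p%:Z + q%:Z - a%:Z = p%:Z + (q%:Z - a%:Z) by ring.
  move=> p1 p2 h1 h2 _ _; exact: shift_inj.
lia.
Qed.

End CaseB.

Lemma main_sec : exists m : str Sigma,
    [/\ wf_str m, MES C m, occ (Fin s) m = 1%N, all_occ_extend C s m &
      forall m' : str Sigma, wf_str m' -> MES C m' -> occ (Fin s) m' = 1%N ->
        all_occ_extend C s m' -> str_eq m' m].
Proof.
case: (classic (forall b, agreeR b)) => HA.
  exists (Cyc c0); split.
  - exact: hC HC0.
  - exact: A_MES.
  - exact: A_occ1 HA.
  - exact: A_ext HA.
  - move=> m' h1 h2 h3 h4; exact: A_uniq HA m' h1 h2 h3 h4.
have [b nb] : exists b, ~ agreeR b := not_all_ex_not _ _ HA.
have [r [HR HR']] : exists r, agreeR r /\ ~ agreeR r.+1.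
  by apply: induct_step; [move=> c z _ k | exists b].
have hrs : (size s <= r)%N.
  case: (leqP (size s) r) => // h; exfalso; apply: HR' => c z oz k hk.
  apply: agreeR_s => //; lia.
have HLex : exists a, ~ agreeL a.
  apply: NNPP => N; apply: HA => b' c z oz k hk.
  have all : forall a, agreeL a by move=> a'; apply: NNPP => h; apply: N; exists a'.
  exact: (full_of_left all oz k).
have [a [HL HL']] : exists a, agreeL a /\ ~ agreeL a.+1.
  by apply: induct_step; [move=> c z _ k /andP [h1 h2]; lia | exact: HLex].
exists (Fin (u r a)); split.
- by [].
- exact: B_MES HR HR' HL HL' hrs.
- exact: B_occ1 HR' HL hrs.
- exact: B_ext HR HL hrs.
- move=> m' h1 h2 h3 h4; exact: B_uniq HR HR' HL HL' hrs m' h1 h2 h3 h4.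
Qed.

End Main.



Theorem theorem10 (Sigma : finType) (C : seq Sigma -> Prop)
  (hC : chromosome_set C) (s : seq Sigma) :
  0 < size s -> substring_of_set C (Fin s) ->
  exists m : str Sigma,
    [/\ wf_str m, MES C m, occ (Fin s) m = 1, all_occ_extend C s m &
      forall m' : str Sigma, wf_str m' -> MES C m' -> occ (Fin s) m' = 1 ->
        all_occ_extend C s m' -> str_eq m' m].
Proof.
move=> hs [c0 hc0 hpos].
have [i0 hi0 ho] := (count_pos _ _).1 hpos.
case Es: s hs => [|x0 s'] // hs.
rewrite -Es in hs *.
exact: (@main_sec Sigma x0 C hC s hs c0 i0 hc0 hi0 ho).
Qed.
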